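(* For $X_d=\otimes_{j=1}^d X_{1,j}$, the following are equivalent: (i) $\lim_{d\to\infty}n^{X_d}(\varepsilon)=\infty$ for every $\varepsilon\in(0,1)$; (ii) $\displaystyle\sum_{j=1}^\infty\sum_{k=2}^\infty\frac{\lambda^{X_{1,j}}_k}{\lambda^{X_{1,j}}_1}=\infty$.
   Context: For a centered Hilbert-space random element $Z$ with finite second moment, $\lambda^Z_1\ge\lambda^Z_2\ge\dots\ge 0$ denote the eigenvalues of its covariance operator $K^Z$ listed with multiplicity (padded with zeros if there are finitely many), $\Lambda^Z=\sum_k\lambda^Z_k$, $\bar\lambda^Z_k=\lambda^Z_k/\Lambda^Z$. Let $H_{1,j}$, $j\in\mathbb N$, be separable Hilbert spaces and $X_{1,j}$ centered $H_{1,j}$-valued random elements with $\mathbb E\|X_{1,j}\|^2<\infty$ and $\lambda^{X_{1,j}}_1>0$. $X_d=\otimes_{j=1}^dX_{1,j}$ means: $X_d$ is a centered random element of the Hilbert tensor product $H_d=\otimes_{j=1}^dH_{1,j}$ with covariance operator $K^{X_d}=\otimes_{j=1}^dK^{X_{1,j}}$; so the eigenvalues of $K^{X_d}$ are the products $\prod_{j=1}^d\lambda^{X_{1,j}}_{k_j}$, $(k_1,\dots,k_d)\in\mathbb N^d$, and $\Lambda^{X_d}=\prod_j\Lambda^{X_{1,j}}$. The average case approximation complexity is $n^{X_d}(\varepsilon)=\min\{n\in\mathbb N: e^{X_d}(n)\le\varepsilon e^{X_d}(0)\}$, where $e^{X_d}(0)=(\mathbb E\|X_d\|^2)^{1/2}$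 and $e^{X_d}(n)$ is the infimum of $(\mathbb E\|X_d-\sum_{m=1}^n l_m(X_d)\psi_m\|^2)^{1/2}$ over $\psi_m\in H_d$, $l_m\in H_d^*$; equivalently $n^{X_d}(\varepsilon)=\min\{n:\sum_{k>n}\bar\lambda^{X_d}_k\le\varepsilon^2\}$. *)

(* Defs.v *)
From Stdlib Require Import Reals List.
Open Scope R_scope.

(* Covariance eigenvalues of the factors X_{1,j} are given by
   [lam j k] = lambda^{X_{1,j}}_{k+1}  (both j and k are 0-indexed). *)

(* Eigenvalue of K^{X_d} indexed by the multi-index [m] (a list of length d):
   prod_{j < length m} lam j (nth j m). *)
Fixpoint tprod (lam : nat -> nat -> R) (j : nat) (m : list nat) : R :=
  match m with
  | nil => 1
  | a :: m' => lam j a * tprod lam (S j) m'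
  end.

Definition tensor_eig (lam : nat -> nat -> R) (m : list nat) : R := tprod lam 0 m.

(* [mu] is the sequence (0-indexed) of eigenvalues of K^{X_d}, i.e. of the products
   prod_{j<d} lam j (k_j), listed with multiplicity in nonincreasing order and padded
   with zeros if there are finitely many nonzero ones. *)
Definition is_tensor_eig_enum (lam : nat -> nat -> R) (d : nat) (mu : nat -> R) : Prop :=
  (forall k, 0 <= mu k) /\
  (forall k, mu (S k) <= mu k) /\
  exists sigma : nat -> list nat,
    (forall k, 0 < mu k -> length (sigma k) = d /\ tensor_eig lam (sigma k) = mu k) /\
    (forall k k', 0 < mu k -> 0 < mu k' -> sigma k = sigma k' -> k = k') /\
    (forall m, length m = d -> 0 < tensor_eig lam m ->
       exists k, 0 < mu k /\ sigma k = m).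

(* sum_{k > n} (normalized eigenvalue)_k <= eps^2, with normalization by
   Lambda = sum_k mu_k (here [n] counts the number of discarded leading eigenvalues). *)
Definition tail_le (mu : nat -> R) (n : nat) (eps : R) : Prop :=
  exists L l, infinite_sum mu L /\ infinite_sum (fun i => mu (n + i)%nat) l /\
              l / L <= eps ^ 2.

Definition is_complexity (mu : nat -> R) (eps : R) (n : nat) : Prop :=
  tail_le mu n eps /\ (forall m, (m < n)%nat -> ~ tail_le mu m eps).

(* Main.v *)
Require Import Defs.
From Stdlib Require Import Reals List Lra Lia Classical.
From Coquelicot Require Import Coquelicot.
Open Scope R_scope.

Definition Rsum (l : list R) : R := fold_right Rplus 0 l.

Lemma Rsum_app l1 l2 : Rsum (l1 ++ l2) = Rsum l1 + Rsum l2.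
Proof. induction l1; simpl; [ring| rewrite IHl1; ring]. Qed.

Lemma Rsum_seqS f n : Rsum (map f (seq 0 (S n))) = Rsum (map f (seq 0 n)) + f n.
Proof. rewrite seq_S, map_app, Rsum_app. simpl. ring. Qed.

Lemma Rsum_sum_f f n : Rsum (map f (seq 0 (S n))) = sum_f_R0 f n.
Proof. induction n. simpl. ring. rewrite Rsum_seqS, IHn. simpl. ring. Qed.

Lemma Rsum_nonneg {A} (f : A -> R) l : (forall x, In x l -> 0 <= f x) -> 0 <= Rsum (map f l).
Proof. induction l; simpl; intros H. lra.
  assert (0 <= f a) by auto. assert (0 <= Rsum (map f l)) by auto. lra. Qed.

Lemma Rsum_incl {A} (f : A -> R) l1 : forall l2,
  (forall x, In x l2 -> 0 <= f x) -> NoDup l1 -> incl l1 l2 -> Rsum (map f l1) <= Rsum (map f l2).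
Proof.
  induction l1 as [|a l1 IH]; intros l2 Hf Hnd Hinc; simpl.
  - apply Rsum_nonneg; auto.
  - inversion Hnd; subst.
    assert (Ha : In a l2) by (apply Hinc; left; auto).
    destruct (in_split _ _ Ha) as [x [y Hxy]]. subst l2.
    assert (Rsum (map f l1) <= Rsum (map f (x ++ y))).
    { apply IH; auto.
      - intros z Hz. apply Hf. apply in_app_iff in Hz. apply in_app_iff. simpl. tauto.
      - intros z Hz. assert (In z (x ++ a :: y)) by (apply Hinc; right; auto).
        apply in_app_iff in H. apply in_app_iff. simpl in H. destruct H as [H|[H|H]]; auto.
        subst. contradiction. }
    rewrite !map_app, !Rsum_app in *. simpl. lra.
Qed.

Lemma Rsum_scal {A} (f : A -> R) c l : Rsum (map (fun x => c * f x) l) = c * Rsum (map f l).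
Proof. induction l; simpl; [ring| rewrite IHl; ring]. Qed.

Lemma Rsum_flat_map {A B} (g : B -> R) (h : A -> list B) s :
  Rsum (map g (flat_map h s)) = Rsum (map (fun a => Rsum (map g (h a))) s).
Proof. induction s; simpl; auto. rewrite map_app, Rsum_app, IHs. auto. Qed.

Lemma Rsum_filter {A} (f : A -> R) l : (forall x, In x l -> 0 <= f x) ->
  Rsum (map f l) = Rsum (map f (List.filter (fun x => if Rlt_dec 0 (f x) then true else false) l)).
Proof. induction l; simpl; intros H; auto.
  destruct (Rlt_dec 0 (f a)); simpl; rewrite IHl; auto.
  assert (0 <= f a) by auto. assert (f a = 0) by lra. rewrite H1. ring. Qed.

Fixpoint box (d K : nat) : list (list nat) :=
  match d with
  | O => nil :: nil
  | S d' => flat_map (fun a => map (cons a) (box d' K)) (seq 0 K)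
  end.

Lemma in_box d K m : In m (box d K) <-> length m = d /\ List.Forall (fun a => (a < K)%nat) m.
Proof.
  revert m; induction d; intros m; simpl.
  - split. intros [H|[]]; subst; simpl; auto.
    intros [H _]; destruct m; simpl in *; [auto|discriminate].
  - rewrite in_flat_map. split.
    + intros [a [Ha Hm]]. apply in_map_iff in Hm. destruct Hm as [m' [<- Hm']].
      apply IHd in Hm'. apply in_seq in Ha. simpl. destruct Hm'. split; auto.
      constructor; auto. lia.
    + intros [Hl HF]. destruct m as [|a m']; [discriminate|]. simpl in Hl.
      inversion HF; subst. exists a. split. apply in_seq. lia.
      apply in_map. apply IHd. auto.
Qed.

Lemma NoDup_box_aux (B : list (list nat)) s : NoDup s -> NoDup B ->
  NoDup (flat_map (fun a => map (cons a) B) s).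
Proof.
  induction s as [|a s IH]; intros Hs HB; simpl. constructor.
  inversion Hs; subst. apply NoDup_app.
  - apply NoDup_map_NoDup_ForallPairs; auto. intros x y _ _ E. injection E; auto.
  - auto.
  - intros x Hx Hx'. apply in_map_iff in Hx. destruct Hx as [m [<- _]].
    apply in_flat_map in Hx'. destruct Hx' as [b [Hb Hm]]. apply in_map_iff in Hm.
    destruct Hm as [m' [E _]]. injection E; intros; subst. contradiction.
Qed.

Lemma NoDup_box d K : NoDup (box d K).
Proof. induction d; simpl. repeat constructor. auto. apply NoDup_box_aux; auto. apply seq_NoDup. Qed.

Fixpoint prodF (f : nat -> R) (j d : nat) : R :=
  match d with O => 1 | S d' => f j * prodF f (S j) d' end.

Lemma box_sum lam d K : forall j,
  Rsum (map (tprod lam j) (box d K)) = prodF (fun i => Rsum (map (lam i) (seq 0 K))) j d.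
Proof.
  induction d; intros j; simpl. ring.
  rewrite Rsum_flat_map.
  transitivity (Rsum (map (fun a => lam j a * prodF (fun i => Rsum (map (lam i) (seq 0 K))) (S j) d) (seq 0 K))).
  - f_equal. apply map_ext. intros a. rewrite map_map. simpl. rewrite Rsum_scal, IHd. auto.
  - transitivity (Rsum (map (fun a => prodF (fun i => Rsum (map (lam i) (seq 0 K))) (S j) d * lam j a) (seq 0 K))).
    f_equal. apply map_ext; intros; ring. rewrite Rsum_scal. ring.
Qed.

Lemma bound_lists (l : list (list nat)) : exists K, forall m, In m l -> List.Forall (fun a => (a < K)%nat) m.
Proof.
  induction l as [|m l [K HK]]. exists O. intros m [].
  assert (exists K', List.Forall (fun a => (a < K')%nat) m) as [K' HK'].
  { clear. induction m as [|a m [K HK]]. exists O; constructor.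
    exists (S (a + K)). constructor. simpl; lia. eapply Forall_impl; [|exact HK]. intros x Hx; simpl in *; lia. }
  exists (K + K')%nat. intros x [<-|Hx]. eapply Forall_impl; [|exact HK']. intros z Hz; simpl in *; lia.
  eapply Forall_impl; [|exact (HK x Hx)]. intros z Hz; simpl in *; lia.
Qed.

Lemma bound_nats (l : list nat) : exists N, forall k, In k l -> (k < N)%nat.
Proof. induction l as [|a l [N HN]]. exists O; intros k []. exists (S (a + N)).
  intros k [<-|H]. lia. specialize (HN k H). lia. Qed.

Lemma my_sum_growing a : (forall k, 0 <= a k) -> Un_growing (sum_f_R0 a).
Proof. intros H n. simpl. specialize (H (S n)). lra. Qed.

Lemma psum_le a L : (forall k, 0 <= a k) -> infinite_sum a L ->
  forall n, Rsum (map a (seq 0 n)) <= L.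
Proof.
  intros H HL n. pose proof (growing_ineq _ _ (my_sum_growing a H) HL) as G.
  destruct n. simpl. specialize (G O). specialize (H O). simpl in G. lra.
  rewrite Rsum_sum_f. apply G.
Qed.

Lemma cv_const c : Un_cv (fun _ => c) c.
Proof. intros eps He. exists O. intros. rewrite R_dist_eq. auto. Qed.

Lemma cv_shift u l : Un_cv (fun n => u (S n)) l -> Un_cv u l.
Proof. intros H eps He. destruct (H eps He) as [N HN]. exists (S N). intros n Hn.
  destruct n. lia. apply HN. lia. Qed.

Lemma lim_le a L B : infinite_sum a L -> (forall n, sum_f_R0 a n <= B) -> L <= B.
Proof. intros HL HB. apply Rle_cv_lim with (Un := sum_f_R0 a) (Vn := fun _ => B); auto. apply cv_const. Qed.

Lemma tail_val a n L l : infinite_sum a L -> infinite_sum (fun i => a (n+i)%nat) l ->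
  l = L - Rsum (map a (seq 0 n)).
Proof.
  intros HL Hl. destruct n.
  - simpl. rewrite Rminus_0_r. apply (UL_sequence _ _ _ Hl HL).
  - apply is_series_Reals in HL. apply is_series_Reals in Hl.
    assert (H : is_series (fun k => a (S n + k)%nat) (L - Rsum (map a (seq 0 (S n))))).
    { apply is_series_incr_n. lia. replace (plus _ _) with L. exact HL.
      rewrite sum_n_Reals. simpl pred. rewrite <- Rsum_sum_f.
      unfold plus; simpl. ring. }
    apply is_series_unique in H. apply is_series_unique in Hl. congruence.
Qed.

Lemma Lam_of_r (b : nat -> R) rj : 0 < b O -> infinite_sum (fun k => b (S k) / b O) rj ->
  infinite_sum b (b O * (1 + rj)).
Proof.
  intros Hb H. apply is_series_Reals in H. apply is_series_Reals.
  apply (is_series_scal (b O)) in H.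
  apply is_series_decr_1.
  replace (plus _ _) with (scal (b O) rj).
  2:{ unfold plus, opp, scal; simpl. unfold mult; simpl. ring. }
  eapply is_series_ext; [|exact H]. intros n. unfold scal; simpl. unfold mult; simpl. field. lra.
Qed.

Lemma r_ex (b : nat -> R) L : 0 < b O -> infinite_sum b L -> ex_series (fun k => b (S k) / b O).
Proof.
  intros Hb H. apply is_series_Reals in H. exists ((L - b O) / b O).
  assert (H' : is_series b (plus (L - b O) (b O))).
  { replace (plus _ _) with L. exact H. unfold plus; simpl. ring. }
  apply (is_series_incr_1 b (L - b O)) in H'. clear H. rename H' into H.
  apply (is_series_scal (/ b O)) in H.
  replace ((L - b O) / b O) with (scal (/ b O) (L - b O)).
  2:{ unfold scal; simpl. unfold mult; simpl. unfold Rdiv. ring. }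
  eapply is_series_ext; [|exact H]. intros n. unfold scal; simpl. unfold mult; simpl. unfold Rdiv. ring.
Qed.

Lemma prodF_nonneg f j d : (forall i, 0 <= f i) -> 0 <= prodF f j d.
Proof. revert j; induction d; intros j H; simpl. lra. apply Rmult_le_pos; auto. Qed.

Lemma prodF_pos f j d : (forall i, 0 < f i) -> 0 < prodF f j d.
Proof. revert j; induction d; intros j H; simpl. lra. apply Rmult_lt_0_compat; auto. Qed.

Lemma prodF_le f g j d : (forall i, 0 <= f i <= g i) -> prodF f j d <= prodF g j d.
Proof. revert j; induction d; intros j H; simpl. lra.
  apply Rmult_le_compat. apply H. apply prodF_nonneg. apply H. apply H. auto. Qed.

Lemma prodF_mult f g j d : prodF (fun i => f i * g i) j d = prodF f j d * prodF g j d.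
Proof. revert j; induction d; intros j; simpl. ring. rewrite IHd. ring. Qed.

Lemma prodF_cv (u : nat -> nat -> R) l d : forall j, (forall i, Un_cv (fun K => u K i) (l i)) ->
  Un_cv (fun K => prodF (u K) j d) (prodF l j d).
Proof. induction d; intros j H; simpl. apply cv_const.
  exact (CV_mult _ _ _ _ (H j) (IHd (S j) H)). Qed.

Fixpoint sumF (f : nat -> R) (j d : nat) : R :=
  match d with O => 0 | S d' => f j + sumF f (S j) d' end.

Lemma sumF_nonneg f j d : (forall i, 0 <= f i) -> 0 <= sumF f j d.
Proof. revert j; induction d; intros j H; simpl. lra. pose proof (H j). specialize (IHd (S j) H). lra. Qed.

Lemma prod_ge_sum r j d : (forall i, 0 <= r i) -> 1 + sumF r j d <= prodF (fun i => 1 + r i) j d.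
Proof. revert j; induction d; intros j H; simpl. lra.
  specialize (IHd (S j) H). pose proof (H j). pose proof (sumF_nonneg r (S j) d H). nra. Qed.

Lemma prod_le_exp r j d : (forall i, 0 <= r i) -> prodF (fun i => 1 + r i) j d <= exp (sumF r j d).
Proof. revert j; induction d; intros j H; simpl. rewrite exp_0. lra.
  rewrite exp_plus. apply Rmult_le_compat.
  pose proof (H j); lra. apply prodF_nonneg. intros i; pose proof (H i); lra.
  destruct (Req_dec (r j) 0) as [E|E]. rewrite E, exp_0. lra. left. apply exp_ineq1. auto.
  auto. Qed.

Lemma sumF_sum r n : forall j, sumF r j (S n) = sum_f_R0 (fun i => r (j + i)%nat) n.
Proof. induction n; intros j. simpl. rewrite Nat.add_0_r. ring.
  rewrite decomp_sum by lia. simpl pred. change (sumF r j (S (S n))) with (r j + sumF r (S j) (S n)).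
  rewrite IHn. rewrite Nat.add_0_r. f_equal. apply sum_eq. intros; f_equal; lia. Qed.

Section T.
Variable lam : nat -> nat -> R.
Hypothesis Hnonneg : forall j k, 0 <= lam j k.
Hypothesis Hdecr : forall j k, lam j (S k) <= lam j k.
Hypothesis Hpos : forall j, 0 < lam j 0%nat.

Lemma lam_le0 j a : lam j a <= lam j O.
Proof. induction a. lra. pose proof (Hdecr j a). lra. Qed.

Lemma tprod_nonneg m : forall j, 0 <= tprod lam j m.
Proof. induction m; intros j; simpl. lra. apply Rmult_le_pos; auto. Qed.

Lemma tprod_le m : forall j, tprod lam j m <= prodF (fun i => lam i O) j (length m).
Proof. induction m; intros j; simpl. lra. apply Rmult_le_compat; auto using tprod_nonneg, lam_le0. Qed.

Lemma tprod_repeat d : forall j, tprod lam j (repeat O d) = prodF (fun i => lam i O) j d.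
Proof. induction d; intros j; simpl; auto. rewrite IHd. auto. Qed.

Variable d : nat.
Variable mu : nat -> R.
Hypothesis Hmu : is_tensor_eig_enum lam d mu.

Lemma mu_nonneg k : 0 <= mu k.
Proof. destruct Hmu as [H _]. auto. Qed.

Lemma mu_le0 k : mu k <= mu O.
Proof. destruct Hmu as [_ [H _]]. induction k. lra. pose proof (H k). lra. Qed.

Lemma Rsum_mu_le n : Rsum (map mu (seq 0 n)) <= INR n * mu O.
Proof. induction n. simpl. lra. rewrite Rsum_seqS, S_INR. pose proof (mu_le0 n). lra. Qed.

Lemma mu0_le : mu O <= prodF (fun i => lam i O) 0 d.
Proof.
  destruct Hmu as [_ [_ [sigma [Hs _]]]].
  destruct (Rlt_dec 0 (mu O)) as [P|P].
  - destruct (Hs O P) as [Hl He]. rewrite <- He. unfold tensor_eig. rewrite <- Hl. apply tprod_le.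
  - pose proof (prodF_pos (fun i => lam i O) 0 d Hpos). lra.
Qed.

Lemma mu0_ge : prodF (fun i => lam i O) 0 d <= mu O.
Proof.
  destruct Hmu as [_ [_ [sigma [Hs [_ Hex]]]]].
  destruct (Hex (repeat O d)) as [k [Pk Ek]].
  apply repeat_length. unfold tensor_eig. rewrite tprod_repeat. apply prodF_pos; auto.
  destruct (Hs k Pk) as [_ He]. rewrite Ek in He. unfold tensor_eig in He.
  rewrite tprod_repeat in He. rewrite He. apply mu_le0.
Qed.

Variable Lam : nat -> R.
Hypothesis HL : forall i, infinite_sum (lam i) (Lam i).

Lemma ps_le K i : 0 <= Rsum (map (lam i) (seq 0 K)) <= Lam i.
Proof. split. apply Rsum_nonneg; auto. apply psum_le; auto. Qed.

Lemma mu_upper N : Rsum (map mu (seq 0 N)) <= prodF Lam 0 d.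
Proof.
  destruct Hmu as [_ [_ [sigma [Hs [Hinj _]]]]].
  set (F := List.filter (fun x => if Rlt_dec 0 (mu x) then true else false) (seq 0 N)).
  assert (HF : forall k, In k F -> 0 < mu k).
  { intros k Hk. apply filter_In in Hk. destruct Hk as [_ Hk]. destruct (Rlt_dec 0 (mu k)); auto; discriminate. }
  rewrite (Rsum_filter mu) by (intros; apply mu_nonneg). fold F.
  assert (E : map mu F = map (tensor_eig lam) (map sigma F)).
  { rewrite map_map. apply map_ext_in. intros k Hk. symmetry. apply (Hs k (HF k Hk)). }
  rewrite E.
  destruct (bound_lists (map sigma F)) as [K HK].
  apply Rle_trans with (Rsum (map (tensor_eig lam) (box d K))).
  - apply Rsum_incl.
    + intros; apply tprod_nonneg.
    + apply NoDup_map_NoDup_ForallPairs. intros x y Hx Hy Exy. apply Hinj; auto.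
      apply NoDup_filter, seq_NoDup.
    + intros m Hm. apply in_box. split; auto.
      apply in_map_iff in Hm. destruct Hm as [k [<- Hk]]. apply (Hs k (HF k Hk)).
  - unfold tensor_eig. rewrite box_sum. apply prodF_le. intros i. apply ps_le.
Qed.

Lemma mu_lower L : infinite_sum mu L -> prodF Lam 0 d <= L.
Proof.
  intros HmuL.
  destruct Hmu as [_ [_ [sigma [Hs [Hinj Hex]]]]].
  assert (Hbox : forall K, prodF (fun i => Rsum (map (lam i) (seq 0 K))) 0 d <= L).
  { intros K. rewrite <- box_sum.
    assert (G : forall lm, NoDup lm -> (forall m, In m lm -> length m = d) ->
       exists lk, NoDup lk /\ (forall k, In k lk -> 0 < mu k /\ In (sigma k) lm) /\
                  Rsum (map (tprod lam 0) lm) = Rsum (map mu lk)).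
    { induction lm as [|m lm IH]; intros Hnd Hlen.
      - exists nil. split. constructor. split. intros k0 []. reflexivity.
      - inversion Hnd; subst. destruct IH as [lk [Hlk [Hin Hs']]]; auto.
        intros; apply Hlen; right; auto.
        destruct (Rlt_dec 0 (tprod lam 0 m)) as [P|P].
        + destruct (Hex m (Hlen m (or_introl eq_refl)) P) as [k [Pk Ek]].
          exists (k :: lk). split; [|split].
          * constructor; auto. intros Hk. destruct (Hin k Hk) as [_ Hk']. rewrite Ek in Hk'. contradiction.
          * intros k' [<-|Hk']. split; auto. left; auto. destruct (Hin k' Hk'); split; auto. right; auto.
          * simpl. rewrite Hs'. f_equal. destruct (Hs k Pk) as [_ He]. rewrite Ek in He. exact He.
        + exists lk. split; [auto|split].
          * intros k' Hk'. destruct (Hin k' Hk'); split; auto. right; auto.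
          * simpl. rewrite Hs'. pose proof (tprod_nonneg m O). assert (Z0 : tprod lam 0 m = 0) by lra.
            rewrite Z0. ring. }
    destruct (G (box d K)) as [lk [Hlk [_ E]]]. apply NoDup_box.
    intros m Hm. apply in_box in Hm. tauto.
    rewrite E. destruct (bound_nats lk) as [N HN].
    apply Rle_trans with (Rsum (map mu (seq 0 N))).
    apply Rsum_incl; auto. intros; apply mu_nonneg. intros k Hk. apply in_seq. specialize (HN k Hk). lia.
    apply psum_le; auto. apply mu_nonneg. }
  apply Rle_cv_lim with (Un := fun K => prodF (fun i => Rsum (map (lam i) (seq 0 K))) 0 d) (Vn := fun _ => L); auto.
  2: apply cv_const.
  apply prodF_cv. intros i. apply cv_shift. eapply Un_cv_ext; [|exact (HL i)].
  intros n. simpl. rewrite <- Rsum_sum_f. reflexivity.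
Qed.
End T.

Lemma r_nonneg (b : nat -> R) rj : (forall k, 0 <= b k) -> 0 < b O ->
  infinite_sum (fun k => b (S k) / b O) rj -> 0 <= rj.
Proof.
  intros Hn Hp H.
  assert (Hf : forall k, 0 <= b (S k) / b O).
  { intros k. unfold Rdiv. apply Rmult_le_pos; auto. left; apply Rinv_0_lt_compat; auto. }
  pose proof (growing_ineq _ _ (my_sum_growing (fun k => b (S k) / b O) Hf) H O). simpl in H0. specialize (Hf O). lra.
Qed.

Theorem proposition4
  (lam : nat -> nat -> R)
  (Hnonneg : forall j k, 0 <= lam j k)
  (Hdecr : forall j k, lam j (S k) <= lam j k)
  (Hpos : forall j, 0 < lam j 0%nat)
  (Hsum : forall j, exists L, infinite_sum (lam j) L)
  (mu : nat -> nat -> R)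
  (Hmu : forall d, is_tensor_eig_enum lam d (mu d)) :
  (forall eps, 0 < eps < 1 ->
     forall M : nat, exists D : nat, forall d n, (D <= d)%nat ->
       is_complexity (mu d) eps n -> (M <= n)%nat)
  <->
  (exists r : nat -> R,
     (forall j, infinite_sum (fun k => lam j (S k) / lam j 0%nat) (r j)) /\
     cv_infty (fun J => sum_f_R0 r J)).
Proof.
  split.
  - intros Hi.
    set (r := fun j => Series (fun k => lam j (S k) / lam j 0%nat)).
    assert (Hr : forall j, infinite_sum (fun k => lam j (S k) / lam j 0%nat) (r j)).
    { intros j. apply is_series_Reals. apply Series_correct. destruct (Hsum j) as [L HL].
      eapply r_ex; eauto. }
    exists r. split; auto.
    assert (Hr0 : forall j, 0 <= r j) by (intros j; eapply r_nonneg; eauto).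
    set (Lam := fun j => lam j O * (1 + r j)).
    assert (HLam : forall j, infinite_sum (lam j) (Lam j)) by (intros j; apply Lam_of_r; auto).
    apply NNPP. intros Hn. unfold cv_infty in Hn.
    apply not_all_ex_not in Hn. destruct Hn as [B HB].
    assert (HsB : forall J, sum_f_R0 r J <= B).
    { intros J. apply Rnot_lt_le. intros HJ. apply HB. exists J. intros n Hn.
      pose proof (growing_prop _ n J (my_sum_growing r Hr0) Hn). lra. }
    assert (B0 : 0 <= B) by (pose proof (HsB O); pose proof (Hr0 O); simpl in *; lra).
    assert (HF : forall d, sumF r 0 d <= B).
    { intros [|d]. simpl; lra. rewrite sumF_sum. apply HsB. }
    set (c := / exp B).
    assert (Hexp : 1 <= exp B).
    { destruct (Req_dec B 0) as [E|E]. rewrite E, exp_0; lra. pose proof (exp_ineq1 B E). lra. }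
    assert (Hc : 0 < c <= 1).
    { unfold c. split. apply Rinv_0_lt_compat. apply exp_pos.
      rewrite <- Rinv_1. apply Rinv_le_contravar; lra. }
    set (eps := 1 - c / 2).
    destruct (Hi eps ltac:(unfold eps; lra) 2%nat) as [D HD].
    assert (Heps2 : 1 - c <= eps ^ 2 < 1).
    { unfold eps. split; nra. }
    pose proof (Hmu D) as HmuD.
    set (A := prodF (fun i => lam i O) 0 D).
    set (Q := prodF (fun i => 1 + r i) 0 D).
    assert (HA : 0 < A) by (apply prodF_pos; auto).
    assert (HQ : Q <= exp B) by (apply Rle_trans with (exp (sumF r 0 D)); [apply prod_le_exp; auto|];
       destruct (Req_dec (sumF r 0 D) B) as [E|E]; [rewrite E; lra|left; apply exp_increasing; pose proof (HF D); lra]).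
    assert (HP : prodF Lam 0 D = A * Q) by (unfold Lam, A, Q; apply prodF_mult).
    assert (Hm0 : A <= mu D O) by (apply mu0_ge; auto).
    assert (Hcx : forall L, infinite_sum (mu D) L -> mu D O <= L).
    { intros L HL. pose proof (growing_ineq _ _ (my_sum_growing _ (mu_nonneg _ _ _ HmuD)) HL O).
      simpl in H. lra. }
    assert (Hc1 : is_complexity (mu D) eps 1).
    { split.
      - destruct (growing_cv (sum_f_R0 (mu D))) as [L HL].
        apply my_sum_growing. apply (mu_nonneg _ _ _ HmuD).
        exists (prodF Lam 0 D). intros x [i ->]. rewrite <- Rsum_sum_f.
        eapply mu_upper; eauto.
        exists L, (L - mu D O). split; [exact HL|split].
        + apply is_series_Reals. apply is_series_incr_1. replace (plus _ _) with L.
          apply is_series_Reals; exact HL. unfold plus; simpl; ring.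
        + assert (HLup : L <= A * Q).
          { rewrite <- HP. apply (lim_le _ _ _ HL). intros n. rewrite <- Rsum_sum_f.
            eapply mu_upper; eauto. }
          pose proof (Hcx L HL) as HL0.
          assert (HcL : c * L <= mu D O).
          { apply Rle_trans with (c * (A * exp B)).
            apply Rmult_le_compat_l. lra. apply Rle_trans with (A * Q); auto.
            apply Rmult_le_compat_l; lra.
            unfold c. replace (/ exp B * (A * exp B)) with A by (field; apply Rgt_not_eq, exp_pos). lra. }
          apply Rle_trans with (1 - c); [|lra].
          replace ((L - mu D O) / L) with (1 - mu D O / L) by (field; lra).
          assert (c <= mu D O / L).
          { replace c with (c * L / L) by (field; lra). unfold Rdiv.
            apply Rmult_le_compat_r. left; apply Rinv_0_lt_compat; lra. lra. }
          lra.
      - intros m Hm [L [l [HL [Hl Hle]]]]. assert (m = O) by lia. subst m.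
        pose proof (tail_val _ _ _ _ HL Hl) as E. simpl in E. rewrite Rminus_0_r in E. subst l.
        pose proof (Hcx L HL). replace (L / L) with 1 in Hle by (field; lra). lra. }
    pose proof (HD D 1%nat (le_n D) Hc1). lia.
  - intros [r [Hr Hcv]] eps Heps M.
    assert (Hr0 : forall j, 0 <= r j) by (intros j; eapply r_nonneg; eauto).
    set (Lam := fun j => lam j O * (1 + r j)).
    assert (HLam : forall j, infinite_sum (lam j) (Lam j)) by (intros j; apply Lam_of_r; auto).
    set (c := 1 - eps ^ 2).
    assert (Hc : 0 < c <= 1) by (unfold c; split; nra).
    destruct (Hcv (INR M / c)) as [N HN].
    exists (S N). intros d n Hd [[L [l [HL [Hl Hle]]]] _].
    pose proof (Hmu d) as Hmud.
    set (A := prodF (fun i => lam i O) 0 d).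
    set (Q := prodF (fun i => 1 + r i) 0 d).
    assert (HA : 0 < A) by (apply prodF_pos; auto).
    assert (HQ : 1 + sumF r 0 d <= Q) by (apply prod_ge_sum; auto).
    assert (HS : INR M / c < sumF r 0 d).
    { destruct d as [|d']. lia. rewrite sumF_sum. apply HN. lia. }
    assert (HP : prodF Lam 0 d = A * Q) by (unfold Lam, A, Q; apply prodF_mult).
    assert (HLlo : A * Q <= L) by (rewrite <- HP; eapply mu_lower; eauto).
    assert (Hm0 : mu d O <= A) by (apply mu0_le; auto).
    pose proof (tail_val _ _ _ _ HL Hl) as E.
    pose proof (Rsum_mu_le _ _ _ Hmud n) as Hs.
    pose proof (pos_INR n) as Hn0.
    assert (HQ1 : 1 <= Q) by (pose proof (sumF_nonneg r 0 d Hr0); lra).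
    assert (HL0 : 0 < L) by nra.
    assert (Hl2 : l <= eps ^ 2 * L).
    { replace l with (l / L * L) by (field; lra). apply Rmult_le_compat_r; lra. }
    assert (H1 : c * L <= INR n * A).
    { unfold c. assert (INR n * mu d O <= INR n * A) by (apply Rmult_le_compat_l; lra). nra. }
    assert (H2 : c * Q <= INR n).
    { apply Rmult_le_reg_l with A; auto. nra. }
    assert (H3 : INR M < c * Q).
    { apply Rle_lt_trans with (c * (INR M / c)). right; field; lra.
      apply Rmult_lt_compat_l; lra. }
    assert (INR M < INR n) by lra. apply INR_lt in H. lia.
Qed.
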